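(* Let $A, B_1, \ldots, B_m \in \mathbb{C}^{d\times d}$ and let $D_{A,B}=\overline{A}\otimes A+\sum_{k=1}^m \overline{B}_k\otimes B_k$, $C_{A,B}=\overline{A}\otimes I+I\otimes A+\sum_{k=1}^m \overline{B}_k\otimes B_k$, $N_{A,B}=A^*A+\sum_{k=1}^m B_k^*B_k$, $M_{A,B}=A+A^*+\sum_{k=1}^m B_k^*B_k$. If $N_{A,B}=\beta I$ for a scalar $\beta$, then $\rho(D_{A,B})=\beta$. If $M_{A,B}=\beta I$ for a scalar $\beta$, then $\alpha(C_{A,B})=\beta$.
   Context: $\overline{X}$ denotes entrywise complex conjugate, $X^*$ conjugate transpose, $I$ the identity, $\otimes$ the Kronecker product. For a square matrix $X$, $\rho(X)=\max\{|\lambda|\}$ over eigenvalues $\lambda$ of $X$ (spectral radius) and $\alpha(X)=\max\{\operatorname{Re}\lambda\}$ over eigenvalues $\lambda$ of $X$ (spectral abscissa). *)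

(* Defs.v *)
From HB Require Import structures.
From mathcomp Require Import all_boot all_order all_algebra.
From mathcomp Require Export mxtens.
Set Implicit Arguments. Unset Strict Implicit. Unset Printing Implicit Defensive.
Import Order.TTheory GRing.Theory Num.Theory.
Local Open Scope ring_scope.

(* Complex scalars: an arbitrary numClosedFieldType C (e.g. the complex numbers),
   which comes with complex conjugation z^* and real/imaginary parts. *)

Definition mxconj {C : numClosedFieldType} {m n : nat} (X : 'M[C]_(m, n)) : 'M[C]_(m, n) :=
  map_mx (@Num.conj C) X.

Definition mxadj {C : numClosedFieldType} {m n : nat} (X : 'M[C]_(m, n)) : 'M[C]_(n, m) :=
  (mxconj X)^T.

Definition is_max_over_spectrum {C : numClosedFieldType} {n : nat}
  (f : C -> C) (X : 'M[C]_n) (r : C) : Prop :=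
  (exists2 l, eigenvalue X l & f l = r) /\
  (forall l, eigenvalue X l -> f l <= r).

Definition spectral_radius_is {C : numClosedFieldType} {n : nat} (X : 'M[C]_n) (r : C) :=
  is_max_over_spectrum (fun l => `|l|) X r.

Definition spectral_abscissa_is {C : numClosedFieldType} {n : nat} (X : 'M[C]_n) (r : C) :=
  is_max_over_spectrum (fun l => 'Re l) X r.

Definition D_AB {C : numClosedFieldType} {d m : nat} (A : 'M[C]_d) (B : 'I_m -> 'M[C]_d)
  : 'M[C]_(d * d) :=
  mxconj A *t A + \sum_(k < m) mxconj (B k) *t B k.

Definition C_AB {C : numClosedFieldType} {d m : nat} (A : 'M[C]_d) (B : 'I_m -> 'M[C]_d)
  : 'M[C]_(d * d) :=
  mxconj A *t 1%:M + 1%:M *t A + \sum_(k < m) mxconj (B k) *t B k.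

Definition N_AB {C : numClosedFieldType} {d m : nat} (A : 'M[C]_d) (B : 'I_m -> 'M[C]_d)
  : 'M[C]_d :=
  mxadj A *m A + \sum_(k < m) mxadj (B k) *m B k.

Definition M_AB {C : numClosedFieldType} {d m : nat} (A : 'M[C]_d) (B : 'I_m -> 'M[C]_d)
  : 'M[C]_d :=
  A + mxadj A + \sum_(k < m) mxadj (B k) *m B k.

(* Main.v *)
Require Import Defs.
From mathcomp Require Import all_boot all_order all_algebra.
From mathcomp Require Import mxtens.
From mathcomp Require Import sesquilinear spectral.
From mathcomp Require Import ring.
Import Order.TTheory GRing.Theory Num.Theory.
Set Implicit Arguments. Unset Strict Implicit. Unset Printing Implicit Defensive.
Local Open Scope ring_scope.

Section Adj.
Variable C : numClosedFieldType.

Lemma adj_mul m n p (X : 'M[C]_(m, n)) (Y : 'M[C]_(n, p)) :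
  mxadj (X *m Y) = mxadj Y *m mxadj X.
Proof. by rewrite /mxadj /mxconj map_mxM trmx_mul. Qed.

Lemma adjK m n (X : 'M[C]_(m, n)) : mxadj (mxadj X) = X.
Proof. by apply/matrixP => i j; rewrite !mxE conjCK. Qed.

Lemma adjD m n (X Y : 'M[C]_(m, n)) : mxadj (X + Y) = mxadj X + mxadj Y.
Proof. by apply/matrixP => i j; rewrite !mxE rmorphD. Qed.

Lemma adjB m n (X Y : 'M[C]_(m, n)) : mxadj (X - Y) = mxadj X - mxadj Y.
Proof. by apply/matrixP => i j; rewrite !mxE rmorphB. Qed.

Lemma adjZ m n a (X : 'M[C]_(m, n)) : mxadj (a *: X) = a^* *: mxadj X.
Proof. by apply/matrixP => i j; rewrite !mxE rmorphM. Qed.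

Lemma adj_sum m n I (r : seq I) (P : pred I) (F : I -> 'M[C]_(m, n)) :
  mxadj (\sum_(i <- r | P i) F i) = \sum_(i <- r | P i) mxadj (F i).
Proof.
elim/big_rec2: _ => [|i x y _ <-]; last by rewrite adjD.
by apply/matrixP => i j; rewrite !mxE rmorph0.
Qed.

Lemma adj_scalar n a : mxadj (a%:M : 'M[C]_n) = (a^*)%:M.
Proof. by apply/matrixP => i j; rewrite !mxE rmorphMn eq_sym. Qed.

Lemma adj00 (X : 'M[C]_1) : mxadj X 0 0 = (X 0 0)^*.
Proof. by rewrite !mxE. Qed.

Definition ip n (x y : 'rV[C]_n) := (x *m mxadj y) 0 0.
Arguments ip {n}.

Lemma ipE n (x y : 'rV[C]_n) : ip x y = dotmx x y.
Proof. by rewrite dotmxE /ip /mxadj /mxconj map_trmx. Qed.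

Lemma ip_ge0 n (x : 'rV[C]_n) : 0 <= ip x x.
Proof. by rewrite ipE; apply: dnorm_ge0. Qed.

Lemma ip_gt0 n (x : 'rV[C]_n) : x != 0 -> 0 < ip x x.
Proof. by rewrite ipE dnorm_gt0. Qed.

Lemma ip_real n (x : 'rV[C]_n) : ip x x \is Num.real.
Proof. by rewrite realE ip_ge0. Qed.

Lemma ip_cs n (x y : 'rV[C]_n) : `|ip x y| ^+ 2 <= ip x x * ip y y.
Proof. by rewrite !ipE; exact: (CauchySchwarz (@dotmx C n) x y). Qed.

Lemma ipMl n p (x : 'rV[C]_n) (K : 'M[C]_(n, p)) y :
  ip (x *m K) y = ip x (y *m mxadj K).
Proof. by rewrite /ip adj_mul adjK mulmxA. Qed.

Lemma ipDl n (x y z : 'rV[C]_n) : ip (x + y) z = ip x z + ip y z.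
Proof. by rewrite /ip mulmxDl mxE. Qed.

Lemma ipZl n a (x z : 'rV[C]_n) : ip (a *: x) z = a * ip x z.
Proof. by rewrite /ip -scalemxAl mxE. Qed.

Lemma ip_suml n I (r : seq I) (P : pred I) (F : I -> 'rV[C]_n) z :
  ip (\sum_(i <- r | P i) F i) z = \sum_(i <- r | P i) ip (F i) z.
Proof.
elim/big_rec2: _ => [|i x y _ <-]; last by rewrite ipDl.
by rewrite /ip mul0mx mxE.
Qed.

Lemma ipC n (x y : 'rV[C]_n) : ip y x = (ip x y)^*.
Proof. by rewrite /ip -adj00 adj_mul adjK. Qed.

Lemma KI n p (Y : 'M[C]_(n, p)) s (x : 'rV[C]_n) q :
  0 <= s -> (forall x, ip (x *m Y) (x *m Y) <= s * ip x x) ->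
  `|ip (x *m Y) q| <= (s * ip x x + ip q q) / 2.
Proof.
move=> s0 Hs.
have X0 : 0 <= s * ip x x by rewrite mulr_ge0 ?ip_ge0.
have q0 := ip_ge0 q.
set X := s * ip x x in X0 *; set b := ip q q in q0 *.
have h1 : `|ip (x *m Y) q| ^+ 2 <= X * b.
  apply: le_trans (ip_cs _ _) _.
  by rewrite ler_wpM2r // Hs.
have h2 : X * b <= ((X + b) / 2) ^+ 2.
  rewrite -subr_ge0.
  have -> : ((X + b) / 2) ^+ 2 - X * b = ((X - b) / 2) ^+ 2.
    by rewrite !expr2; field.
  rewrite -realEsqr; apply: rpredM; first by rewrite rpredB // ger0_real.
  by rewrite rpredV ger0_real.
rewrite -(ler_pXn2r (_ : (0 < 2)%N)) // ?nnegrE //.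
  exact: le_trans h1 h2.
by rewrite divr_ge0 // addr_ge0.
Qed.

End Adj.
Section Spec.
Variable C : numClosedFieldType.

Lemma exists_max n (f : 'I_n.+1 -> C) : (forall i, f i \is Num.real) ->
  exists i, forall j, f j <= f i.
Proof.
move=> fR.
suff H : forall s : seq 'I_n.+1, exists i, forall j, j \in s -> f j <= f i.
  by have [i Hi] := H (enum 'I_n.+1); exists i => j; apply: Hi; rewrite mem_enum.
elim=> [|x s [i Hi]]; first by exists ord0.
have /orP [le|le] := real_leVge (fR x) (fR i).
  by exists i => j; rewrite inE => /orP [/eqP ->|/Hi].
exists x => j; rewrite inE => /orP [/eqP ->|/Hi h]; first by [].
exact: le_trans h le.
Qed.

Lemma adjE m n (X : 'M[C]_(m, n)) : (X ^t* )%sesqui = mxadj X.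
Proof. by rewrite /mxadj /mxconj map_trmx. Qed.

Lemma top_vec n (Y : 'M[C]_n.+1) : Y != 0 ->
  exists s (u : 'rV_n.+1), [/\ 0 < s, ip u u = 1,
     u *m (Y *m mxadj Y) = s *: u &
     forall x, ip (x *m Y) (x *m Y) <= s * ip x x].
Proof.
move=> Y0.
set H := Y *m mxadj Y.
have Hadj : mxadj H = H by rewrite /H adj_mul adjK.
have Hn : H \is normalmx by apply/normalmxP; rewrite adjE Hadj.
have HE := orthomx_spectralP Hn.
set P := spectralmx H in HE; set sg := spectral_diag H in HE.
have Pu : P \is unitarymx by exact: spectral_unitarymx.
have PQ : P *m mxadj P = 1%:M by rewrite -adjE; apply/unitarymxP.
have QP : mxadj P *m P = 1%:M by apply: mulmx1C.
rewrite invmx_unitary // adjE in HE.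
have PH : P *m H = diag_mx sg *m P by rewrite HE !mulmxA PQ mul1mx.
have xH : forall x, ip (x *m Y) (x *m Y) = (x *m H *m mxadj x) 0 0.
  by move=> x; rewrite /ip adj_mul /H !mulmxA.
have uu : forall i, ip (row i P) (row i P) = 1.
  by move=> i; move/row_unitarymxP: Pu => /(_ i i); rewrite -ipE eqxx.
have rH : forall i, row i P *m H = sg 0 i *: row i P.
  by move=> i; rewrite -row_mul PH row_mul row_diag_mx -scalemxAl -rowE.
have sgE : forall i, sg 0 i = ip (row i P *m Y) (row i P *m Y).
  by move=> i; rewrite xH rH -scalemxAl mxE -/(ip _ _) uu mulr1.
have sgR : forall j, (fun j => sg 0 j) j \is Num.real by move=> j; rewrite sgE ip_real.
have [i Hi] := exists_max sgR.
have bound : forall x, ip (x *m Y) (x *m Y) <= sg 0 i * ip x x.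
  move=> x; rewrite xH HE.
  set z := x *m mxadj P.
  have -> : x *m (mxadj P *m diag_mx sg *m P) *m mxadj x
            = z *m diag_mx sg *m mxadj z by rewrite /z adj_mul adjK !mulmxA.
  have -> : ip x x = ip z z.
    by rewrite /ip /z adj_mul adjK mulmxA -(mulmxA x) QP mulmx1.
  clearbody z; rewrite /ip mul_mx_diag !mxE mulr_sumr; apply: ler_sum => j _; rewrite !mxE.
  rewrite mulrAC [X in _ <= X]mulrC; apply: ler_wpM2l; first exact: mul_conjC_ge0.
  exact: Hi.
exists (sg 0 i), (row i P); split => //; rewrite ?uu ?rH //.
have s0 : 0 <= sg 0 i by rewrite sgE ip_ge0.
rewrite lt_def s0 andbT; apply/negP => /eqP s0'.
move/negP: Y0; apply; apply/eqP/row_matrixP => k; rewrite row0.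
have := bound 'e_k; rewrite s0' mul0r -rowE => h.
have : ip (row k Y) (row k Y) == 0 by rewrite eq_le h ip_ge0.
by rewrite ipE dnorm_eq0 => /eqP.
Qed.
End Spec.
Section Tens.
Variable C : numClosedFieldType.

Definition unvec n (v : 'rV[C]_(n * n)) : 'M[C]_n :=
  \matrix_(i, j) v 0 (mxtens_index (i, j)).

Lemma tensE n (v : 'rV[C]_(n * n)) (X1 X2 : 'M[C]_n) k l :
  (v *m (X1 *t X2)) 0 (mxtens_index (k, l)) = (X1^T *m unvec v *m X2) k l.
Proof.
rewrite mxE (reindex (@mxtens_index n n)) /=; last first.
  by exists (@mxtens_unindex n n) => q _; [apply: mxtens_indexK | apply: mxtens_unindexK].
transitivity (\sum_i \sum_j v 0 (mxtens_index (i, j)) * (X1 i k * X2 j l)).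
  by rewrite pair_bigA; apply: eq_bigr => [[i j]] _ /=; rewrite tensmxE.
rewrite mxE; under [RHS]eq_bigr do rewrite mxE mulr_suml.
rewrite exchange_big /=; apply: eq_bigr => i _; apply: eq_bigr => j _.
by rewrite !mxE mulrA [X1 _ _ * _]mulrC.
Qed.

Lemma eig_unvec n (T : 'M[C]_(n * n)) (F : 'M[C]_n -> 'M[C]_n) l :
  (forall v k j, (v *m T) 0 (mxtens_index (k, j)) = F (unvec v) k j) ->
  eigenvalue T l -> exists2 Y, Y != 0 & F Y = l *: Y.
Proof.
move=> HT /eigenvalueP [v vT v0]; exists (unvec v).
  apply: contra v0 => /eqP Y0; apply/eqP/rowP => q.
  case: (mxtens_indexP q) => i j.
  by have := congr1 (fun M : 'M[C]_n => M i j) Y0; rewrite !mxE.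
apply/matrixP => k j; rewrite -HT vT !mxE.
by [].
Qed.

Lemma unvec_eig n (T : 'M[C]_(n.+1 * n.+1)) (F : 'M[C]_n.+1 -> 'M[C]_n.+1) l :
  (forall v k j, (v *m T) 0 (mxtens_index (k, j)) = F (unvec v) k j) ->
  F 1%:M = l *: 1%:M -> eigenvalue T l.
Proof.
move=> HT F1; apply/eigenvalueP.
pose v : 'rV[C]_(n.+1 * n.+1) :=
  \row_q (1%:M : 'M[C]_n.+1) (@mxtens_unindex n.+1 n.+1 q).1 (@mxtens_unindex n.+1 n.+1 q).2.
have Uv : unvec v = 1%:M.
  by apply/matrixP => i j; rewrite !mxE mxtens_indexK.
exists v.
  apply/rowP => q; case: (mxtens_indexP q) => i j.
  by rewrite HT Uv F1 !mxE mxtens_indexK.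
apply/eqP => /rowP /(_ (mxtens_index (ord0, ord0))).
by rewrite !mxE mxtens_indexK eqxx /= => /eqP; rewrite oner_eq0.
Qed.
End Tens.
Section Main.
Variable C : numClosedFieldType.
Variables (n m : nat) (A : 'M[C]_n.+1) (B : 'I_m -> 'M[C]_n.+1).

Definition PhiD (Y : 'M[C]_n.+1) :=
  mxadj A *m Y *m A + \sum_(k < m) mxadj (B k) *m Y *m B k.
Definition PhiC (Y : 'M[C]_n.+1) :=
  mxadj A *m Y + Y *m A + \sum_(k < m) mxadj (B k) *m Y *m B k.

Lemma D_spec v k j :
  (v *m D_AB A B) 0 (mxtens_index (k, j)) = PhiD (unvec v) k j.
Proof.
rewrite /D_AB /PhiD mulmxDr mulmx_sumr [LHS]mxE [RHS]mxE !summxE tensE.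
by congr (_ + _); apply: eq_bigr => i _; rewrite tensE.
Qed.

Lemma C_spec v k j :
  (v *m C_AB A B) 0 (mxtens_index (k, j)) = PhiC (unvec v) k j.
Proof.
rewrite /C_AB /PhiC !mulmxDr mulmx_sumr [LHS]mxE [RHS]mxE [in LHS]mxE [in RHS]mxE !summxE !tensE.
rewrite trmx1 mulmx1 mul1mx.
by congr (_ + _); apply: eq_bigr => i _; rewrite tensE.
Qed.

Lemma N_form (x : 'rV[C]_n.+1) :
  (x *m N_AB A B *m mxadj x) 0 0 =
  ip (x *m mxadj A) (x *m mxadj A) + \sum_(k < m) ip (x *m mxadj (B k)) (x *m mxadj (B k)).
Proof.
rewrite /N_AB mulmxDr mulmxDl mxE mulmx_sumr mulmx_suml summxE.
rewrite /ip adj_mul adjK !mulmxA; congr (_ + _); apply: eq_bigr => k _.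
by rewrite adj_mul adjK !mulmxA.
Qed.

Lemma M_form (x : 'rV[C]_n.+1) :
  (x *m M_AB A B *m mxadj x) 0 0 =
  ip (x *m A) x + (ip (x *m A) x)^* + \sum_(k < m) ip (x *m mxadj (B k)) (x *m mxadj (B k)).
Proof.
rewrite /M_AB !(mulmxDr, mulmxDl) [LHS]mxE [X in X + _ = _]mxE mulmx_sumr mulmx_suml summxE.
rewrite /ip -adj00 !adj_mul adjK !mulmxA; congr (_ + _ + _); apply: eq_bigr => k _.
by rewrite adj_mul adjK !mulmxA.
Qed.

Lemma scal_form (x : 'rV[C]_n.+1) b : (x *m b%:M *m mxadj x) 0 0 = b * ip x x.
Proof. by rewrite mul_mx_scalar -scalemxAl mxE. Qed.

Lemma adjN : mxadj (N_AB A B) = N_AB A B.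
Proof.
rewrite /N_AB adjD adj_sum adj_mul adjK; congr (_ + _).
by apply: eq_bigr => k _; rewrite adj_mul adjK.
Qed.

Lemma adjM : mxadj (M_AB A B) = M_AB A B.
Proof.
rewrite /M_AB !adjD adj_sum adjK [mxadj A + A]addrC; congr (_ + _).
by apply: eq_bigr => k _; rewrite adj_mul adjK.
Qed.

Lemma real_of_adj (X : 'M[C]_n.+1) b : mxadj X = X -> X = b%:M -> b \is Num.real.
Proof.
move=> hX hb; apply/CrealP.
have := congr1 (fun M : 'M[C]_n.+1 => M 0 0) hX.
by rewrite hb !mxE eqxx /= mulr1n.
Qed.

Lemma part1 beta : N_AB A B = beta%:M -> spectral_radius_is (D_AB A B) beta.
Proof.
move=> hN.
have bR : beta \is Num.real by apply: (real_of_adj adjN hN).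
have b0 : 0 <= beta.
  have := N_form 'e_0; rewrite hN scal_form.
  have -> : ip ('e_0 : 'rV[C]_n.+1) 'e_0 = 1.
    by rewrite /ip !mxE (bigD1 0) //= big1 => [|j /negPf hj]; rewrite !mxE ?eqxx ?hj /= ?conjC1 ?mulr1 ?addr0 ?mulr0 ?mul0r.
  rewrite mulr1 => ->; apply: addr_ge0; first exact: ip_ge0.
  by apply: sumr_ge0 => k _; exact: ip_ge0.
split.
  exists beta; last by rewrite ger0_norm.
  apply: (@unvec_eig _ _ _ PhiD) => [v k j|]; first exact: D_spec.
  by rewrite /PhiD mulmx1 (eq_bigr (fun k => mxadj (B k) *m B k)) ?scalemx1 -?hN // => k _; rewrite mulmx1.
move=> l /(eig_unvec D_spec) [Y Y0 hY].
have [s [u [s0 uu uH bnd]]] := top_vec Y0.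
set w := u *m Y.
have ww : ip w w = s.
  rewrite /w /ip adj_mul !mulmxA -(mulmxA u) uH -scalemxAl mxE.
  by rewrite -/(ip u u) uu mulr1.
have sR : s \is Num.real by rewrite realE ltW.
have key : l * s = ip (u *m mxadj A *m Y) (w *m mxadj A)
        + \sum_(k < m) ip (u *m mxadj (B k) *m Y) (w *m mxadj (B k)).
  rewrite -ww -ipZl scalemxAr -hY /PhiD mulmxDr mulmx_sumr ipDl ip_suml.
  congr (_ + _); first by rewrite !mulmxA [LHS]ipMl.
  by apply: eq_bigr => k _; rewrite !mulmxA [LHS]ipMl.
rewrite -(ler_pM2r s0) -{1}(ger0_norm (ltW s0)) -normrM key.
apply: le_trans (ler_normD _ _) _.
apply: le_trans (lerD (lexx _) (ler_norm_sum _ _ _)) _.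
have h1 := KI (u *m mxadj A) (w *m mxadj A) (ltW s0) bnd.
have h2 : \sum_(k < m) `|ip (u *m mxadj (B k) *m Y) (w *m mxadj (B k))| <=
   \sum_(k < m) (s * ip (u *m mxadj (B k)) (u *m mxadj (B k))
                  + ip (w *m mxadj (B k)) (w *m mxadj (B k))) / 2.
  by apply: ler_sum => k _; apply: KI; [exact: ltW|].
apply: le_trans (lerD h1 h2) _.
have Nu := N_form u; have Nw := N_form w.
rewrite hN !scal_form uu ww in Nu Nw.
rewrite -mulr_suml big_split /= -mulr_sumr.
rewrite le_eqVlt; apply/orP; left; apply/eqP.
have E : beta * s = (s * (ip (u *m mxadj A) (u *m mxadj A) + \sum_(k < m) ip (u *m mxadj (B k)) (u *m mxadj (B k)))
   + (ip (w *m mxadj A) (w *m mxadj A) + \sum_(k < m) ip (w *m mxadj (B k)) (w *m mxadj (B k)))) / 2.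
  by rewrite -Nu -Nw; field.
by rewrite E; field.
Qed.

Lemma Re_le_norm (z : C) : 'Re z <= `|z|.
Proof. by case: (leif_Re_Creal z). Qed.

Lemma part2 beta : M_AB A B = beta%:M -> spectral_abscissa_is (C_AB A B) beta.
Proof.
move=> hM.
have bR : beta \is Num.real by apply: (real_of_adj adjM hM).
split.
  exists beta; last by apply/Creal_ReP.
  apply: (@unvec_eig _ _ _ PhiC) => [v k j|]; first exact: C_spec.
  rewrite /PhiC mulmx1 mul1mx (eq_bigr (fun k => mxadj (B k) *m B k)) ?scalemx1 -?hM //.
    by rewrite /M_AB [mxadj A + A]addrC.
  by move=> k _; rewrite mulmx1.
move=> l /(eig_unvec C_spec) [Y Y0 hY].
have [s [u [s0 uu uH bnd]]] := top_vec Y0.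
set w := u *m Y.
have ww : ip w w = s.
  rewrite /w /ip adj_mul !mulmxA -(mulmxA u) uH -scalemxAl mxE.
  by rewrite -/(ip u u) uu mulr1.
have sR : s \is Num.real by rewrite realE ltW.
set a := ip (u *m A) u; set b := ip (w *m A) w.
set S := \sum_(k < m) ip (u *m mxadj (B k) *m Y) (w *m mxadj (B k)).
have T1 : ip (u *m mxadj A *m Y) w = s * a^*.
  rewrite ipMl /w -mulmxA uH /ip adjZ -scalemxAr mxE (conj_Creal sR).
  by congr (_ * _); rewrite /a -ipC /ip adj_mul mulmxA.
have key : l * s = s * a^* + b + S.
  rewrite -T1 -ww -ipZl scalemxAr -hY /PhiC !mulmxDr mulmx_sumr !ipDl ip_suml.
  congr (_ + _ + _); first by rewrite mulmxA.
  by rewrite /b /w mulmxA.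
  by apply: eq_bigr => k _; rewrite !mulmxA [LHS]ipMl.
have Mu := M_form u; have Mw := M_form w.
rewrite hM !scal_form uu ww -/a -/b in Mu Mw.
set Su := \sum_(k < m) _ in Mu; set Sw := \sum_(k < m) _ in Mw.
have hS : S + S^* <= s * Su + Sw.
  have h1 : (S + S^*) / 2 <= `|S| by rewrite -ReE; exact: Re_le_norm.
  have h2 : `|S| <= (s * Su + Sw) / 2.
    apply: le_trans (ler_norm_sum _ _ _) _.
    rewrite /Su /Sw mulr_sumr -big_split /= mulr_suml; apply: ler_sum => k _.
    by apply: KI; [exact: ltW|].
  have := le_trans h1 h2; rewrite ler_pM2r //; by rewrite invr_gt0 ltr0n.
rewrite -(ler_pM2r s0) -(ReMr sR) key ReE !rmorphD rmorphM /= conjCK (conj_Creal sR).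
set T := s * (a + a^*) + (b + b^*).
apply: (@le_trans _ _ ((T + (S + S^*)) / 2)).
  by rewrite le_eqVlt; apply/orP; left; apply/eqP; rewrite /T; field.
have E2 : beta * s = (T + (s * Su + Sw)) / 2.
  rewrite mulr1 in Mu.
  rewrite /T (_ : a + a^* = beta - Su); last by rewrite Mu; ring.
  rewrite (_ : b + b^* = beta * s - Sw); last by rewrite Mw; ring.
  by field.
rewrite E2; apply: ler_wpM2r; first by rewrite invr_ge0 ler0n.
by rewrite lerD2l.
Qed.
End Main.

Theorem corollary1p2 (C : numClosedFieldType) (d m : nat)
  (A : 'M[C]_d.+1) (B : 'I_m -> 'M[C]_d.+1) :
  (forall beta : C, N_AB A B = beta%:M -> spectral_radius_is (D_AB A B) beta) /\
  (forall beta : C, M_AB A B = beta%:M -> spectral_abscissa_is (C_AB A B) beta).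
Proof.
split; [exact: part1 | exact: part2].
Qed.
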